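(* For every integer $N\ge1$ there exists $\delta_0>0$ depending only on $N$ such that the following holds. Let $U_\varphi,V_\varphi\subset\mathbb R^2$ be open with $\overline B_\infty(0,1)\subset U_\varphi\cap V_\varphi$, where $\overline B_\infty(0,1)=\{(x_1,x_2):\max(|x_1|,|x_2|)\le 1\}$, and let $\varphi:U_\varphi\to V_\varphi$ be a $C^{N+1}$ diffeomorphism onto its image with $\varphi(0)=0$, $d\varphi(0)=\mathrm{diag}(2,1/2)$, and $\sup_{U_\varphi}|\partial^\alpha\varphi|\le\delta$ for all $2\le|\alpha|\le N+1$, where $0<\delta\le\delta_0$. Let $F:[-1,1]\to\mathbb R$ be a $C^1$ function with $F(0)=0$ and $\sup|F'|\le 1$. Then there exists a function $\Phi_uF:[-1,1]\to\mathbb R$ with $\Phi_uF(0)=0$ such that $$\varphi(\mathcal G_u(F))\cap\{|x_1|\le 1\}=\mathcal G_u(\Phi_uF),$$ where for a function $H:[-1,1]\to\mathbb R$ we write $\mathcal G_u(H):=\{(x_1,x_2)\in\mathbb R^2:|x_1|\le1,\ x_2=H(x_1)\}$. *)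

(* Defs.v *)
From Stdlib Require Import Reals List.
From Coquelicot Require Import Coquelicot.
Open Scope R_scope.

Definition pt := (R * R)%type.

Definition partial1 (g : pt -> R) : pt -> R :=
  fun p => Derive (fun t => g (t, snd p)) (fst p).
Definition partial2 (g : pt -> R) : pt -> R :=
  fun p => Derive (fun t => g (fst p, t)) (snd p).

(* Iterated partial derivative along a word of directions
   (true = d/dx1, false = d/dx2); the order |alpha| is the length. *)
Fixpoint iter_pd (l : list bool) (g : pt -> R) : pt -> R :=
  match l with
  | nil => g
  | b :: l' => (if b then partial1 else partial2) (iter_pd l' g)
  end.

Definition Ck_scalar (k : nat) (U : pt -> Prop) (g : pt -> R) : Prop :=
  forall l : list bool, (length l <= k)%nat ->
    (forall p, U p -> continuous (iter_pd l g) p) /\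
    ((length l < k)%nat -> forall p, U p ->
        ex_derive (fun t => iter_pd l g (t, snd p)) (fst p) /\
        ex_derive (fun t => iter_pd l g (fst p, t)) (snd p)).

Definition Ck_map (k : nat) (U : pt -> Prop) (phi : pt -> pt) : Prop :=
  Ck_scalar k U (fun p => fst (phi p)) /\ Ck_scalar k U (fun p => snd (phi p)).

Definition image (phi : pt -> pt) (A : pt -> Prop) : pt -> Prop :=
  fun q => exists p, A p /\ q = phi p.

Definition Ck_diffeo_onto_image (k : nat) (U V : pt -> Prop) (phi : pt -> pt) : Prop :=
  Ck_map k U phi /\
  (forall p, U p -> V (phi p)) /\
  open (image phi U) /\
  exists psi : pt -> pt,
    Ck_map k (image phi U) psi /\
    (forall p, U p -> U (psi (phi p)) /\ psi (phi p) = p) /\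
    (forall q, image phi U q -> U (psi q) /\ phi (psi q) = q).

Definition closed_ball_inf (p : pt) : Prop :=
  Rmax (Rabs (fst p)) (Rabs (snd p)) <= 1.

Definition norm2 (v : pt) : R := sqrt (fst v ^ 2 + snd v ^ 2).

Definition iter_pd_map (l : list bool) (phi : pt -> pt) : pt -> pt :=
  fun p => (iter_pd l (fun q => fst (phi q)) p, iter_pd l (fun q => snd (phi q)) p).

Definition graph_u (H : R -> R) : pt -> Prop :=
  fun p => Rabs (fst p) <= 1 /\ snd p = H (fst p).

(* F : [-1,1] -> R is C^1 with sup_{[-1,1]} |F'| <= 1: realized by a C^1
   function G on R agreeing with F on [-1,1] (equivalent to one-sided C^1 on
   the closed interval), whose derivative is bounded by 1 on [-1,1]. *)
Definition C1_on_interval_lip1 (F : R -> R) : Prop :=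
  exists G : R -> R,
    (forall x, -1 <= x <= 1 -> G x = F x) /\
    (forall x, ex_derive G x) /\
    (forall x, continuous (Derive G) x) /\
    (forall x, -1 <= x <= 1 -> Rabs (Derive G x) <= 1).

(* Main.v *)
Require Import Defs.
From Stdlib Require Import Reals List Lra Lia ClassicalEpsilon.
From Coquelicot Require Import Coquelicot.
Open Scope R_scope.

Lemma mvt_between (f : R -> R) (x y : R) :
  (forall c, Rmin x y <= c <= Rmax x y -> ex_derive f c) ->
  exists c, Rmin x y <= c <= Rmax x y /\ f y - f x = Derive f c * (y - x).
Proof.
  intros Hd.
  destruct (Req_dec x y) as [<-|Hne].
  { exists x. rewrite Rmin_left, Rmax_left by lra. split; [lra|ring]. }
  destruct (Rlt_or_le x y) as [Hlt|Hle].
  - rewrite Rmin_left, Rmax_right in Hd by lra.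
    destruct (MVT_cor2 f (Derive f) x y Hlt) as [c [Hc1 Hc2]].
    { intros c Hc. apply is_derive_Reals. apply Derive_correct. apply Hd; lra. }
    exists c. rewrite Rmin_left, Rmax_right by lra. split; [lra|exact Hc1].
  - assert (Hlt : y < x) by lra.
    rewrite Rmin_right, Rmax_left in Hd by lra.
    destruct (MVT_cor2 f (Derive f) y x Hlt) as [c [Hc1 Hc2]].
    { intros c Hc. apply is_derive_Reals. apply Derive_correct. apply Hd; lra. }
    exists c. rewrite Rmin_right, Rmax_left by lra. split; [lra|].
    replace (f y - f x) with (-(f x - f y)) by ring. rewrite Hc1. ring.
Qed.

Lemma between_abs x y c : Rmin x y <= c <= Rmax x y -> Rabs x <= 1 -> Rabs y <= 1 -> Rabs c <= 1.
Proof.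
  intros Hc Hx Hy. apply Rabs_le_between in Hx. apply Rabs_le_between in Hy.
  apply Rabs_le_between. unfold Rmin, Rmax in Hc.
  destruct (Rle_dec x y); lra.
Qed.

Lemma ball_of x y : Rabs x <= 1 -> Rabs y <= 1 -> closed_ball_inf (x, y).
Proof. intros; unfold closed_ball_inf; simpl; apply Rmax_lub; auto. Qed.

Lemma abs_le_norm2 x y : Rabs x <= norm2 (x, y).
Proof.
  unfold norm2; simpl. rewrite <- sqrt_Rsqr_abs. apply sqrt_le_1_alt.
  unfold Rsqr. nra.
Qed.

Lemma abs_mul_le a b c d : Rabs a <= c -> Rabs b <= d -> Rabs (a * b) <= c * d.
Proof.
  intros. rewrite Rabs_mult. apply Rmult_le_compat; auto using Rabs_pos.
Qed.

Lemma first_var (k : nat) (U : pt -> Prop) (g : pt -> R) (d : R) :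
  (2 <= k)%nat -> Ck_scalar k U g -> (forall p, closed_ball_inf p -> U p) ->
  (forall l, length l = 2%nat -> forall p, U p -> Rabs (iter_pd l g p) <= d) ->
  forall b x y, Rabs x <= 1 -> Rabs y <= 1 ->
  Rabs (iter_pd (b :: nil) g (x, y) - iter_pd (b :: nil) g (0, 0)) <= 2 * d.
Proof.
  intros Hk HC HB HD b x y Hx Hy.
  set (P := iter_pd (b :: nil) g).
  assert (Hex : forall p, closed_ball_inf p ->
     ex_derive (fun t => P (t, snd p)) (fst p) /\ ex_derive (fun t => P (fst p, t)) (snd p)).
  { intros p Hp. destruct (HC (b :: nil)) as [_ H]; [simpl; lia|].
    apply H; [simpl; lia| apply HB; exact Hp]. }
  assert (Habs0 : Rabs 0 <= 1) by (rewrite Rabs_R0; lra).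
  destruct (mvt_between (fun t => P (t, y)) 0 x) as [c [Hc E1]].
  { intros c Hc. exact (proj1 (Hex (c, y) (ball_of _ _ (between_abs _ _ _ Hc Habs0 Hx) Hy))). }
  destruct (mvt_between (fun t => P (0, t)) 0 y) as [c' [Hc' E2]].
  { intros c' Hc'. exact (proj2 (Hex (0, c') (ball_of _ _ Habs0 (between_abs _ _ _ Hc' Habs0 Hy)))). }
  simpl in E1, E2.
  assert (B1 : Rabs (Derive (fun t => P (t, y)) c) <= d).
  { exact (HD (true :: b :: nil) eq_refl (c, y)
      (HB _ (ball_of _ _ (between_abs _ _ _ Hc Habs0 Hx) Hy))). }
  assert (B2 : Rabs (Derive (fun t => P (0, t)) c') <= d).
  { exact (HD (false :: b :: nil) eq_refl (0, c')
      (HB _ (ball_of _ _ Habs0 (between_abs _ _ _ Hc' Habs0 Hy)))). }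
  replace (P (x, y) - P (0, 0)) with ((P (x, y) - P (0, y)) + (P (0, y) - P (0, 0))) by ring.
  rewrite E1, E2.
  eapply Rle_trans; [apply Rabs_triang|].
  assert (0 <= d) by (eapply Rle_trans; [apply Rabs_pos|exact B1]).
  pose proof (abs_mul_le _ _ _ _ B1 (Rle_trans _ _ _ (Req_le _ _ (f_equal Rabs (Rminus_0_r x))) Hx)).
  pose proof (abs_mul_le _ _ _ _ B2 (Rle_trans _ _ _ (Req_le _ _ (f_equal Rabs (Rminus_0_r y))) Hy)).
  lra.
Qed.

Lemma G_lip (G : R -> R) :
  (forall x, ex_derive G x) -> (forall x, -1 <= x <= 1 -> Rabs (Derive G x) <= 1) ->
  forall s t, Rabs s <= 1 -> Rabs t <= 1 -> Rabs (G s - G t) <= Rabs (s - t).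
Proof.
  intros Hd Hb s t Hs Ht.
  destruct (mvt_between G t s) as [c [Hc E]]; [intros; apply Hd|].
  rewrite E. rewrite <- (Rmult_1_l (Rabs (s - t))). apply abs_mul_le; [|lra].
  apply Hb. apply Rabs_le_between. exact (between_abs _ _ _ Hc Ht Hs).
Qed.

Lemma decomp (k:nat) (U : pt -> Prop) (g : pt -> R) (G : R -> R) (d : R) :
 (2 <= k)%nat -> Ck_scalar k U g -> (forall p, closed_ball_inf p -> U p) ->
 (forall l, length l = 2%nat -> forall p, U p -> Rabs (iter_pd l g p) <= d) ->
 iter_pd (true::nil) g (0,0) = 2 -> iter_pd (false::nil) g (0,0) = 0 ->
 (forall x, Rabs x <= 1 -> Rabs (G x) <= 1) ->
 forall s t, Rabs s <= 1 -> Rabs t <= 1 ->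
 exists A B, Rabs (A - 2) <= 2*d /\ Rabs B <= 2*d /\
   g (s, G s) - g (t, G t) = A * (s - t) + B * (G s - G t).
Proof.
  intros Hk HC HB HD H1 H2 HG s t Hs Ht.
  assert (Hex : forall p, closed_ball_inf p ->
     ex_derive (fun t => g (t, snd p)) (fst p) /\ ex_derive (fun t => g (fst p, t)) (snd p)).
  { intros p Hp. destruct (HC nil) as [_ H]; [simpl; lia|].
    apply H; [simpl; lia| apply HB; exact Hp]. }
  destruct (mvt_between (fun x => g (x, G s)) t s) as [c [Hc E1]].
  { intros c Hc. exact (proj1 (Hex (c, G s) (ball_of _ _ (between_abs _ _ _ Hc Ht Hs) (HG _ Hs)))). }
  destruct (mvt_between (fun y => g (t, y)) (G t) (G s)) as [c' [Hc' E2]].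
  { intros c' Hc'. exact (proj2 (Hex (t, c') (ball_of _ _ Ht (between_abs _ _ _ Hc' (HG _ Ht) (HG _ Hs))))). }
  exists (iter_pd (true::nil) g (c, G s)), (iter_pd (false::nil) g (t, c')).
  split; [|split].
  - replace (iter_pd (true :: nil) g (c, G s) - 2) with (iter_pd (true :: nil) g (c, G s) - iter_pd (true :: nil) g (0, 0)) by (rewrite H1; ring).
    eapply (first_var k U g d); eauto.
    exact (between_abs _ _ _ Hc Ht Hs).
  - replace (iter_pd (false :: nil) g (t, c')) with (iter_pd (false :: nil) g (t, c') - iter_pd (false :: nil) g (0, 0)) by (rewrite H2; ring).
    eapply (first_var k U g d); eauto.
    exact (between_abs _ _ _ Hc' (HG _ Ht) (HG _ Hs)).
  - simpl in E1, E2. simpl.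
    replace (g (s, G s) - g (t, G t)) with ((g (s, G s) - g (t, G s)) + (g (t, G s) - g (t, G t))) by ring.
    rewrite E1, E2. reflexivity.
Qed.

Definition clamp (t : R) : R := Rmax (-1) (Rmin 1 t).

Lemma clamp_val t : (t <= -1 /\ clamp t = -1) \/ (-1 <= t <= 1 /\ clamp t = t) \/ (1 <= t /\ clamp t = 1).
Proof.
  unfold clamp. destruct (Rle_lt_dec 1 t).
  - rewrite (Rmin_left 1 t) by lra. rewrite Rmax_right by lra. right; right; lra.
  - rewrite (Rmin_right 1 t) by lra. destruct (Rle_lt_dec (-1) t).
    + rewrite Rmax_right by lra. right; left; lra.
    + rewrite Rmax_left by lra. left; lra.
Qed.

Lemma clamp_in t : -1 <= clamp t <= 1.
Proof. destruct (clamp_val t) as [[? ->]|[[? ->]|[? ->]]]; lra. Qed.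

Lemma clamp_id t : -1 <= t <= 1 -> clamp t = t.
Proof. intros; destruct (clamp_val t) as [[? ->]|[[? ->]|[? ->]]]; lra. Qed.

Lemma clamp_lip s t : Rabs (clamp s - clamp t) <= Rabs (s - t).
Proof.
  destruct (clamp_val t) as [[? ->]|[[? ->]|[? ->]]];
  destruct (clamp_val s) as [[? ->]|[[? ->]|[? ->]]];
  unfold Rabs; repeat match goal with |- context [Rcase_abs ?a] => destruct (Rcase_abs a) end; lra.
Qed.

Lemma lip_cont (h : R -> R) : (forall s t, Rabs (h s - h t) <= 3 * Rabs (s - t)) -> continuity h.
Proof.
  intros Hl x. unfold continuity_pt, continue_in, limit1_in, limit_in.
  intros eps Heps. exists (eps / 3). split; [lra|].
  intros y [_ Hy]. simpl in *. unfold R_dist in *.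
  eapply Rle_lt_trans; [apply Hl|]. assert (HH: 3 * Rabs (y - x) < 3 * (eps / 3)) by (apply Rmult_lt_compat_l; [lra|exact Hy]). eapply Rlt_le_trans; [exact HH|]; right; field.
Qed.

Lemma abstract_graph (a : R -> R) :
  (forall s t, -1 <= t <= 1 -> -1 <= s <= 1 -> Rabs (a s - a t) <= 3 * Rabs (s - t)) ->
  a (-1) <= -1 -> 1 <= a 1 ->
  forall x, Rabs x <= 1 -> exists t, -1 <= t <= 1 /\ a t = x.
Proof.
  intros Hl Hm1 H1 x Hx. apply Rabs_le_between in Hx.
  destruct (Req_dec (a (-1)) x) as [E|E]; [exists (-1); split; [lra|exact E]|].
  destruct (Req_dec (a 1) x) as [E'|E']; [exists 1; split; [lra|exact E']|].
  assert (Hc : continuity (fun t => a (clamp t) - x)).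
  { apply lip_cont. intros s t.
    replace (a (clamp s) - x - (a (clamp t) - x)) with (a (clamp s) - a (clamp t)) by ring.
    eapply Rle_trans; [apply Hl; apply clamp_in|].
    apply Rmult_le_compat_l; [lra|apply clamp_lip]. }
  destruct (IVT _ (-1) 1 Hc) as [z [Hz Ez]].
  - lra.
  - rewrite clamp_id by lra. lra.
  - rewrite clamp_id by lra. lra.
  - exists z. split; [lra|]. rewrite clamp_id in Ez by lra. lra.
Qed.

Theorem lemma2p2 :
  forall N : nat, (1 <= N)%nat ->
  exists delta0 : R, 0 < delta0 /\
  forall (U V : pt -> Prop) (phi : pt -> pt) (delta : R),
    open U -> open V ->
    (forall p, closed_ball_inf p -> U p /\ V p) ->
    Ck_diffeo_onto_image (S N) U V phi ->
    phi (0, 0) = (0, 0) ->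
    partial1 (fun q => fst (phi q)) (0, 0) = 2 ->
    partial2 (fun q => fst (phi q)) (0, 0) = 0 ->
    partial1 (fun q => snd (phi q)) (0, 0) = 0 ->
    partial2 (fun q => snd (phi q)) (0, 0) = 1 / 2 ->
    0 < delta -> delta <= delta0 ->
    (forall l : list bool, (2 <= length l <= S N)%nat ->
       forall p, U p -> norm2 (iter_pd_map l phi p) <= delta) ->
    forall F : R -> R,
      C1_on_interval_lip1 F -> F 0 = 0 ->
      exists PhiF : R -> R,
        PhiF 0 = 0 /\
        forall q : pt,
          (image phi (graph_u F) q /\ Rabs (fst q) <= 1) <-> graph_u PhiF q.
Proof.
  intros N HN. exists (1/8). split; [lra|].
  intros U V phi delta HU HV Hball Hdiff H0 Hd11 Hd12 Hd21 Hd22 Hdp Hdle Hder F HF HF0.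
  destruct HF as [G [HGF [HGd [HGc HGb]]]].
  destruct Hdiff as [[HCg _] _].
  set (g := fun q : pt => fst (phi q)) in *.
  assert (HB : forall p, closed_ball_inf p -> U p) by (intros p Hp; apply (Hball p Hp)).
  assert (HD : forall l, length l = 2%nat -> forall p, U p -> Rabs (iter_pd l g p) <= delta).
  { intros l Hl p Hp. eapply Rle_trans;
      [apply (abs_le_norm2 _ (iter_pd l (fun q => snd (phi q)) p))|].
    exact (Hder l ltac:(lia) p Hp). }
  assert (Hk : (2 <= S N)%nat) by lia.
  pose proof (G_lip G HGd HGb) as HGlip.
  assert (HG0 : G 0 = 0) by (rewrite HGF by lra; exact HF0).
  assert (HGb1 : forall x, Rabs x <= 1 -> Rabs (G x) <= 1).
  { intros x Hx. assert (H0' : Rabs 0 <= 1) by (rewrite Rabs_R0; lra).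
    specialize (HGlip x 0 Hx H0'). rewrite HG0, !Rminus_0_r in HGlip. lra. }
  set (a := fun t => g (t, G t)).
  pose proof (decomp (S N) U g G delta Hk HCg HB HD Hd11 Hd12 HGb1) as Hdec.
  assert (Hmono : forall s t, Rabs s <= 1 -> Rabs t <= 1 -> t < s -> 3/2*(s-t) <= a s - a t).
  { intros s t Hs Ht Hlt. destruct (Hdec s t Hs Ht) as [A [Bc [HA [HBc E]]]].
    unfold a; rewrite E.
    pose proof (HGlip s t Hs Ht) as Hg. rewrite (Rabs_right (s - t)) in Hg by lra.
    apply Rabs_le_between in HA. pose proof (abs_mul_le _ _ _ _ HBc Hg) as HM.
    apply Rabs_le_between in HM. nra. }
  assert (Hlip : forall s t, -1 <= t <= 1 -> -1 <= s <= 1 -> Rabs (a s - a t) <= 3 * Rabs (s - t)).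
  { intros s t Ht Hs. apply Rabs_le_between in Ht. apply Rabs_le_between in Hs.
    destruct (Hdec s t Hs Ht) as [A [Bc [HA [HBc E]]]].
    unfold a; rewrite E.
    pose proof (HGlip s t Hs Ht) as Hg.
    assert (HA' : Rabs A <= 2 + 2 * delta).
    { replace A with ((A - 2) + 2) by ring. eapply Rle_trans; [apply Rabs_triang|].
      rewrite (Rabs_right 2) by lra. lra. }
    pose proof (abs_mul_le _ _ _ _ HBc Hg) as HM.
    pose proof (abs_mul_le _ _ _ _ HA' (Rle_refl (Rabs (s - t)))) as HM2.
    pose proof (Rabs_pos (s - t)).
    eapply Rle_trans; [apply Rabs_triang|]. nra. }
  assert (Ha0 : a 0 = 0).
  { unfold a, g. rewrite HG0, H0. reflexivity. }
  assert (Habs : forall x, -1 <= x <= 1 -> Rabs x <= 1) by (intros; apply Rabs_le_between; lra).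
  assert (Ham1 : a (-1) <= -1).
  { pose proof (Hmono 0 (-1) ltac:(apply Habs; lra) ltac:(apply Habs; lra) ltac:(lra)). lra. }
  assert (Ha1 : 1 <= a 1).
  { pose proof (Hmono 1 0 ltac:(apply Habs; lra) ltac:(apply Habs; lra) ltac:(lra)). lra. }
  pose proof (abstract_graph a Hlip Ham1 Ha1) as Surj.
  assert (Inj : forall s t, Rabs s <= 1 -> Rabs t <= 1 -> a s = a t -> s = t).
  { intros s t Hs Ht E. destruct (Rtotal_order s t) as [Hl|[Hl|Hl]]; auto.
    - pose proof (Hmono t s Ht Hs Hl). lra.
    - pose proof (Hmono s t Hs Ht Hl). lra. }
  assert (HT : forall x, exists t, Rabs x <= 1 -> -1 <= t <= 1 /\ a t = x).
  { intros x. destruct (Rle_dec (Rabs x) 1) as [r|r].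
    - destruct (Surj x r) as [t Ht]. exists t. intros _. exact Ht.
    - exists 0. intros; contradiction. }
  set (T := fun x => proj1_sig (constructive_indefinite_description _ (HT x))).
  assert (HTs : forall x, Rabs x <= 1 -> -1 <= T x <= 1 /\ a (T x) = x).
  { intros x. exact (proj2_sig (constructive_indefinite_description _ (HT x))). }
  exists (fun x => snd (phi (T x, G (T x)))).
  split.
  - assert (H00 : Rabs 0 <= 1) by (rewrite Rabs_R0; lra).
    destruct (HTs 0 H00) as [HTi HTa].
    assert (HT0 : T 0 = 0) by (apply Inj; [apply Habs; lra | exact H00 | rewrite HTa, Ha0; reflexivity]).
    cbv beta. rewrite HT0, HG0, H0. reflexivity.
  - intros [q1 q2]. unfold graph_u, image; simpl. split.
    + intros [[[p1 p2] [[Hp1 Hp2] Eq]] Hq1]. simpl in Hp1, Hp2.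
      rewrite <- HGF in Hp2 by (apply Rabs_le_between; exact Hp1). subst p2.
      assert (Ha : a p1 = q1) by (unfold a, g; rewrite <- Eq; reflexivity).
      destruct (HTs q1 Hq1) as [HTi HTa].
      assert (HTq : T q1 = p1) by (apply Inj; [apply Habs; exact HTi | exact Hp1 | rewrite HTa, Ha; reflexivity]).
      split; [exact Hq1|]. rewrite HTq, <- Eq. reflexivity.
    + intros [Hq1 Hq2]. destruct (HTs q1 Hq1) as [HTi HTa]. split; [|exact Hq1].
      exists (T q1, F (T q1)). split.
      * split; simpl; [apply Habs; exact HTi | reflexivity].
      * rewrite <- HGF by exact HTi. rewrite Hq2.
        apply injective_projections; simpl; [exact (eq_sym HTa) | reflexivity].
Qed.
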